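(* Let $A=\bigoplus_{j=1}^k M_{n_j}(\mathbb{C})$ and $B=\bigoplus_{j=1}^l M_{m_j}(\mathbb{C})$, and let $\phi:A\to B$ be an injective unital *-homomorphism. If $\phi$ is an $L_{\min}$-embedding, then $\operatorname{mult}_\phi(M_{n_j}(\mathbb{C}))=1$ for each $j=1,\dots,k$.
   Context: For a unital C*-algebra $D$, $\rho_{\min}^D(x)=\inf\{\|x-p\|: p\in D \text{ a minimal projection}\}$, where a minimal projection is a nonzero $p=p^2=p^*$ such that any projection $q$ with $qp=q$ satisfies $q=0$ or $q=p$. $L_{\min}$ is the language of unital C*-algebras with an extra unary predicate $P_{\min}$ interpreted in each algebra $D$ as $\rho_{\min}^D$; an $L_{\min}$-embedding is an injective unital *-homomorphism $\phi$ with $\rho_{\min}^B(\phi(a))=\rho_{\min}^A(a)$ for all $a\in A$. For an embedding $\phi:A\to B$, $E_\phi(n_i,m_j)$ denotes the multiplicity with which $\phi$ embeds the summand $M_{n_i}(\mathbb{C})$ of $A$ into the summand $M_{m_j}(\mathbb{C})$ of $B$ (i.e. the partial map $M_{n_i}(\mathbb{C})\to M_{m_j}(\mathbb{C})$ obtained by restricting and projecting is unitarily conjugate to $x\mapsto x\otimes 1_{E_\phi(n_i,m_j)}$ plus zero), and $\operatorname{mult}_\phi(M_{n_i}(\mathbb{C}))=\sum_{j=1}^l E_\phi(n_i,m_j)$. *)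

(* Defs.v *)
From HB Require Import structures.
From mathcomp Require Import all_boot all_order all_algebra.
From mathcomp Require Import boolp classical_sets reals.
From mathcomp Require Import complex.
Set Implicit Arguments. Unset Strict Implicit. Unset Printing Implicit Defensive.
Import Order.TTheory GRing.Theory Num.Theory.
Local Open Scope ring_scope.

Section FDCstar.
Variable R : realType.
Local Notation C := (complex R).

Definition cabs2 (z : C) : R := (complex.Re z) ^+ 2 + (complex.Im z) ^+ 2.

Definition vnorm (n : nat) (v : 'cV[C]_n) : R := Num.sqrt (\sum_(i < n) cabs2 (v i 0)).

Definition opnorm (n : nat) (M : 'M[C]_n) : R :=
  sup [set x : R | exists v : 'cV[C]_n, vnorm v <= 1 /\ x = vnorm (M *m v)].

Definition adjmx (p q : nat) (M : 'M[C]_(p, q)) : 'M[C]_(q, p) :=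
  \matrix_(i, j) conjc (M j i).

Definition FDA (k : nat) (n : 'I_k -> nat) : Type := forall j : 'I_k, 'M[C]_(n j).

Section Ops.
Variables (k : nat) (n : 'I_k -> nat).
Definition fda_zero : FDA n := fun j => 0.
Definition fda_one : FDA n := fun j => 1%:M.
Definition fda_add (a b : FDA n) : FDA n := fun j => a j + b j.
Definition fda_opp (a : FDA n) : FDA n := fun j => - a j.
Definition fda_sub (a b : FDA n) : FDA n := fun j => a j - b j.
Definition fda_scale (c : C) (a : FDA n) : FDA n := fun j => c *: a j.
Definition fda_mul (a b : FDA n) : FDA n := fun j => a j *m b j.
Definition fda_star (a : FDA n) : FDA n := fun j => adjmx (a j).

Definition fda_norm (a : FDA n) : R := \big[Num.max/0]_(j < k) opnorm (a j).

Definition fda_projection (p : FDA n) : Prop :=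
  fda_mul p p = p /\ fda_star p = p.

Definition fda_minproj (p : FDA n) : Prop :=
  fda_projection p /\ p <> fda_zero /\
  forall q : FDA n, fda_projection q -> fda_mul q p = q -> q = fda_zero \/ q = p.

Definition rho_min (x : FDA n) : R :=
  inf [set d : R | exists p : FDA n, fda_minproj p /\ d = fda_norm (fda_sub x p)].

Definition fda_incl (i : 'I_k) (x : 'M[C]_(n i)) : FDA n :=
  fun j => match eqVneq i j with
           | EqNotNeq e => eq_rect i (fun t => 'M[C]_(n t)) x j e
           | NeqNotEq _ => 0
           end.
End Ops.

Section Maps.
Variables (k l : nat) (n : 'I_k -> nat) (m : 'I_l -> nat).

Definition star_hom (phi : FDA n -> FDA m) : Prop :=
  [/\ forall a b, phi (fda_add a b) = fda_add (phi a) (phi b),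
      forall c a, phi (fda_scale c a) = fda_scale c (phi a),
      forall a b, phi (fda_mul a b) = fda_mul (phi a) (phi b),
      forall a, phi (fda_star a) = fda_star (phi a)
    & phi (fda_one n) = fda_one m].

Definition Lmin_embedding (phi : FDA n -> FDA m) : Prop :=
  [/\ star_hom phi, injective phi & forall a, rho_min (phi a) = rho_min a].

(** entry of a matrix at natural-number indices (0 outside the range) *)
Definition mxget (p : nat) (x : 'M[C]_p) (a b : nat) : C :=
  match insub a, insub b with
  | Some a', Some b' => x a' b'
  | _, _ => 0
  end.

(** the m x m matrix  (x (x) 1_e) (+) 0, with e*p <= m; index (a,s) of
    x (x) 1_e is encoded as a*e + s *)
Definition tens_id_pad (p mm e : nat) (x : 'M[C]_p) : 'M[C]_mm :=
  \matrix_(r < mm, c < mm) (if [&& (r < p * e)%N, (c < p * e)%N & (r %% e == c %% e)%N]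
                  then mxget x (r %/ e) (c %/ e) else 0).

Definition unitary (p : nat) (U : 'M[C]_p) : Prop :=
  U *m adjmx U = 1%:M /\ adjmx U *m U = 1%:M.

(** E_phi(n_i, m_j) = e : the partial map M_{n_i} -> M_{m_j},
    x |-> (phi (incl_i x))_j, is unitarily conjugate to x |-> x (x) 1_e (+) 0 *)
Definition multiplicity (phi : FDA n -> FDA m) (i : 'I_k) (j : 'I_l) (e : nat) : Prop :=
  (n i * e <= m j)%N /\
  exists U : 'M[C]_(m j), unitary U /\
    forall x : 'M[C]_(n i),
      U *m phi (fda_incl x) j *m adjmx U = tens_id_pad (m j) e x.
End Maps.
End FDCstar.

(* Main.v *)
Require Import Defs.
From HB Require Import structures.
From mathcomp Require Import all_boot all_order all_algebra.
From mathcomp Require Import boolp classical_sets reals.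
From mathcomp Require Import complex.
From mathcomp Require Import ring lra.
Import Order.TTheory GRing.Theory Num.Theory.
Set Implicit Arguments. Unset Strict Implicit. Unset Printing Implicit Defensive.
Local Open Scope ring_scope.

Section H.
Variable R : realType.
Local Notation C := (complex R).

Lemma cabs2_ge0 (z : C) : 0 <= cabs2 z.
Proof. by rewrite /cabs2 addr_ge0 // sqr_ge0. Qed.

Lemma mulcJ (z : C) : z * conjc z = (cabs2 z)%:C%C.
Proof.
case: z => a b; rewrite /cabs2 /=.
apply/eqP; rewrite eq_complex /=; apply/andP; split; apply/eqP; ring.
Qed.

Lemma cabs2_eq0 (z : C) : cabs2 z = 0 -> z = 0.
Proof.
case: z => a b; rewrite /cabs2 /= => /eqP.
rewrite paddr_eq0 ?sqr_ge0 // !sqrf_eq0 => /andP[/eqP -> /eqP ->] //.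
Qed.

Lemma normc_cabs2 (z : C) : `|z| = (Num.sqrt (cabs2 z))%:C%C.
Proof. by rewrite normc_def. Qed.

Definition vn2 {N : nat} (v : 'cV[C]_N) : R := \sum_(i < N) cabs2 (v i 0).

Lemma vn2_ge0 N (v : 'cV[C]_N) : 0 <= vn2 v.
Proof. by apply: sumr_ge0 => i _; apply: cabs2_ge0. Qed.

Lemma vnorm_ge0 N (v : 'cV[C]_N) : 0 <= vnorm v.
Proof. exact: sqrtr_ge0. Qed.

Lemma vn2_gt0 N (v : 'cV[C]_N) : v != 0 -> 0 < vn2 v.
Proof.
move=> nz; rewrite lt_def vn2_ge0 andbT; apply/eqP => h.
move/eqP: nz; apply; apply/matrixP => a b; rewrite (ord1 b) mxE.
apply: cabs2_eq0; move/eqP: h; rewrite /vn2 psumr_eq0; last by move=> *; apply: cabs2_ge0.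
by move/allP/(_ a (mem_index_enum _))/implyP/(_ isT)/eqP.
Qed.

Lemma cabs2M (z w : C) : cabs2 (z * w) = cabs2 z * cabs2 w.
Proof. case: z w => a b [c d]; rewrite /cabs2 /=; ring. Qed.

Lemma cabs2R (c : R) : cabs2 (c%:C%C) = c ^+ 2.
Proof. by rewrite /cabs2 /= expr0n addr0. Qed.

Lemma vnormZ N (c : R) (v : 'cV[C]_N) : 0 <= c -> vnorm ((c%:C)%C *: v) = c * vnorm v.
Proof.
move=> c0; rewrite /vnorm.
rewrite (eq_bigr (fun i => c ^+ 2 * cabs2 (v i 0))); last first.
  by move=> i _; rewrite mxE cabs2M cabs2R.
by rewrite -mulr_sumr sqrtrM ?sqr_ge0 // sqrtr_sqr ger0_norm.
Qed.


Lemma vn2_le1 N (v : 'cV[C]_N) : vnorm v <= 1 -> vn2 v <= 1.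
Proof. by rewrite /vnorm -{1}sqrtr1 ler_sqrt. Qed.

Lemma cabs2_le_vn2 N (v : 'cV[C]_N) j : cabs2 (v j 0) <= vn2 v.
Proof.
rewrite /vn2 (bigD1 j) //= lerDl; apply: sumr_ge0 => *; exact: cabs2_ge0.
Qed.

Lemma sqrt_cabs2M (z w : C) : Num.sqrt (cabs2 (z * w)) = Num.sqrt (cabs2 z) * Num.sqrt (cabs2 w).
Proof. by rewrite cabs2M sqrtrM // cabs2_ge0. Qed.

Lemma normcE (z : C) : Normc.normc z = Num.sqrt (cabs2 z).
Proof. by case: z. Qed.

Lemma sqrt_cabs2_sum (I : Type) (r : seq I) (F : I -> C) :
  Num.sqrt (cabs2 (\sum_(j <- r) F j)) <= \sum_(j <- r) Num.sqrt (cabs2 (F j)).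
Proof.
elim: r => [|x r IH]; first by rewrite !big_nil /cabs2 /= expr0n addr0 sqrtr0.
rewrite !big_cons; apply: le_trans (lerD (lexx _) IH).
by rewrite -!normcE le_normcD.
Qed.

Definition opset {N} (M : 'M[C]_N) :=
  [set x : R | exists v : 'cV[C]_N, vnorm v <= 1 /\ x = vnorm (M *m v)]%classic.

Lemma opset_ub N (M : 'M[C]_N) : has_ubound (opset M).
Proof.
pose a i := \sum_(j < N) Num.sqrt (cabs2 (M i j)).
exists (Num.sqrt (\sum_(i < N) a i ^+ 2)) => x [v [hv ->]].
rewrite /vnorm ler_sqrt; last by apply: sumr_ge0 => *; apply: sqr_ge0.
apply: ler_sum => i _.
have ha : 0 <= a i by apply: sumr_ge0 => *; apply: sqrtr_ge0.
have hs : Num.sqrt (cabs2 ((M *m v) i 0)) <= a i.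
  rewrite mxE; apply: le_trans (sqrt_cabs2_sum _ _) _.
  under eq_bigr do rewrite sqrt_cabs2M.
  apply: ler_sum => j _; rewrite -[X in _ <= X]mulr1; apply: ler_wpM2l; first exact: sqrtr_ge0.
  rewrite -sqrtr1 ler_sqrt //; apply: le_trans (cabs2_le_vn2 v j) (vn2_le1 hv).
rewrite -(sqr_sqrtr (cabs2_ge0 _)) !expr2.
by apply: ler_pM => //; apply: sqrtr_ge0.
Qed.

Lemma opnorm_ge N (M : 'M[C]_N) v : vnorm v <= 1 -> vnorm (M *m v) <= opnorm M.
Proof. by move=> hv; apply: (ub_le_sup (opset_ub M)); exists v. Qed.

Lemma opnorm_fix N (M : 'M[C]_N) (v : 'cV[C]_N) : v != 0 -> M *m v = v -> 1 <= opnorm M.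
Proof.
move=> nz hM.
have hp : 0 < vnorm v by rewrite /vnorm sqrtr_gt0 vn2_gt0.
set w := ((vnorm v)^-1)%:C%C *: v.
have hw : vnorm w = 1 by rewrite /w vnormZ ?invr_ge0 ?ltW // mulVf // gt_eqF.
have h1 : vnorm w <= 1 by rewrite hw.
have := opnorm_ge M h1.
by rewrite /w -scalemxAr hM -/w hw.
Qed.

Lemma vnorm0 N : vnorm (0 : 'cV[C]_N) = 0.
Proof.
rewrite /vnorm big1 ?sqrtr0 // => i _; by rewrite mxE /cabs2 /= expr0n addr0.
Qed.

Lemma opnorm0 N : opnorm (0 : 'M[C]_N) = 0.
Proof.
rewrite /opnorm.
have -> : [set x : R | exists v : 'cV[C]_N, vnorm v <= 1 /\ x = vnorm ((0 : 'M[C]_N) *m v)]%classic = [set 0]%classic.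
  apply: funext => x; apply: propext; split => /=.
    by move=> [v [_ ->]]; rewrite mul0mx vnorm0.
  move=> ->; exists 0; split; last by rewrite mul0mx vnorm0.
  by rewrite vnorm0.
exact: sup1.
Qed.


Lemma adjmxE p q (A : 'M[C]_(p, q)) i j : adjmx A i j = conjc (A j i).
Proof. by rewrite mxE. Qed.

Lemma adjmx_mul p q r (A : 'M[C]_(p, q)) (B : 'M[C]_(q, r)) :
  adjmx (A *m B) = adjmx B *m adjmx A.
Proof.
apply/matrixP => i j; rewrite !mxE rmorph_sum; apply: eq_bigr => l _.
by rewrite !mxE rmorphM mulrC.
Qed.

Lemma adjmxK p q (A : 'M[C]_(p, q)) : adjmx (adjmx A) = A.
Proof. by apply/matrixP => i j; rewrite !mxE conjcK. Qed.

Lemma adjmxZ p q c (A : 'M[C]_(p, q)) : adjmx (c *: A) = conjc c *: adjmx A.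
Proof. by apply/matrixP => i j; rewrite !mxE rmorphM. Qed.

Lemma adjmx0 p q : adjmx (0 : 'M[C]_(p, q)) = 0.
Proof. by apply/matrixP => i j; rewrite !mxE conjc0. Qed.

Lemma adjmx_delta p (a b : 'I_p) : adjmx (delta_mx a b : 'M[C]_p) = delta_mx b a.
Proof. by apply/matrixP => i j; rewrite !mxE conjc_nat andbC. Qed.

End H.

Section F.
Variable R : realType.
Local Notation C := (complex R).
Variables (K : nat) (N : 'I_K -> nat).

Lemma fda_ext (a b : FDA R N) : (forall j, a j = b j) -> a = b.
Proof. exact: functional_extensionality_dep. Qed.

Lemma fda_incl_id i (x : 'M[C]_(N i)) : fda_incl x i = x.
Proof.
rewrite /fda_incl; case: eqVneq => [e|]; last by rewrite eqxx.
by rewrite (eq_irrelevance e erefl).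
Qed.

Lemma fda_incl_neq i j (x : 'M[C]_(N i)) : i != j -> fda_incl x j = 0.
Proof.
rewrite /fda_incl; case: eqVneq => // e; by rewrite e eqxx.
Qed.

Lemma fda_norm_ge0 (a : FDA R N) : 0 <= fda_norm a.
Proof. exact: bigmax_ge_id. Qed.

Lemma fda_norm_ge (a : FDA R N) j : opnorm (a j) <= fda_norm a.
Proof. exact: (le_bigmax _ (fun j => opnorm (a j))). Qed.

Lemma fda_norm_zero : fda_norm (fda_zero R N) = 0.
Proof.
rewrite /fda_norm; apply: (big_ind (fun x : R => x = 0)) => //.
  by move=> x y -> ->; rewrite maxxx.
by move=> j _; rewrite /fda_zero opnorm0.
Qed.


Lemma mulmx_delta_entry p q r (A : 'M[C]_(p, q)) (u : 'I_q) (v : 'I_r) x y :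
  (A *m delta_mx u v) x y = A x u * (y == v)%:R.
Proof.
rewrite mxE (bigD1 u) //= big1 ?addr0; first by rewrite mxE eqxx.
by move=> c /negbTE nc; rewrite mxE nc mulr0.
Qed.

Lemma minproj_delta j (o : 'I_(N j)) :
  fda_minproj (fda_incl (i:=j) (delta_mx o o : 'M[C]_(N j))).
Proof.
set p := fda_incl _.
have pj : p j = delta_mx o o by rewrite /p fda_incl_id.
have pt : forall t, j != t -> p t = 0 by move=> t ne; rewrite /p fda_incl_neq.
split; [split|split].
- apply: fda_ext => t; rewrite /fda_mul; case: (eqVneq j t) => [<-|ne].
    by rewrite pj mul_delta_mx.
  by rewrite pt // mul0mx.
- apply: fda_ext => t; rewrite /fda_star; case: (eqVneq j t) => [<-|ne].
    by rewrite pj adjmx_delta.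
  by rewrite pt // adjmx0.
- move=> h; have := congr1 (fun a : FDA R N => a j o o) h.
  by rewrite pj /fda_zero !mxE !eqxx /= => /eqP; rewrite oner_eq0.
move=> q [qq qs] qp.
have qt : forall t, j != t -> q t = 0.
  move=> t ne; have := congr1 (fun a : FDA R N => a t) qp.
  by rewrite /fda_mul pt // mulmx0 => <-.
have hQp : q j *m delta_mx o o = q j.
  by have := congr1 (fun a : FDA R N => a j) qp; rewrite /fda_mul pj.
have hQs : adjmx (q j) = q j.
  by have := congr1 (fun a : FDA R N => a j) qs; rewrite /fda_star.
have hQQ : q j *m q j = q j.
  by have := congr1 (fun a : FDA R N => a j) qq; rewrite /fda_mul.
have hQ : q j = q j o o *: delta_mx o o.
  apply/matrixP => a b; rewrite !mxE.
  case: (eqVneq b o) => [->|nb].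
    case: (eqVneq a o) => [->|na]; first by rewrite mulr1.
    rewrite /= mulr0 -hQs mxE -hQp mulmx_delta_entry (negbTE na) mulr0.
    by rewrite conjc0.
  by rewrite andbF mulr0 -hQp mulmx_delta_entry (negbTE nb) mulr0.
set c := q j o o in hQ.
have hc : c * c = c.
  have := congr1 (fun M : 'M[C]_(N j) => M o o) hQQ.
  by rewrite hQ -scalemxAl -scalemxAr mul_delta_mx scalerA !mxE !eqxx /= !mulr1.
have : c * (c - 1) == 0 by rewrite mulrBr mulr1 hc subrr.
rewrite mulf_eq0 subr_eq0 => /orP[/eqP c0|/eqP c1].
  left; apply: fda_ext => t; rewrite /fda_zero; case: (eqVneq j t) => [<-|ne].
    by rewrite hQ c0 scale0r.
  by rewrite qt.
right; apply: fda_ext => t; case: (eqVneq j t) => [<-|ne].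
  by rewrite hQ c1 scale1r pj.
by rewrite qt // pt.
Qed.


Lemma fda_nz (q : FDA R N) : q <> fda_zero R N -> exists j0, q j0 != 0.
Proof.
move=> qnz; case: (pselect (exists j0, q j0 != 0)) => // hn.
exfalso; apply: qnz; apply: fda_ext => t; rewrite /fda_zero.
apply/eqP; case: eqP => // /eqP ht; exfalso; apply: hn; by exists t.
Qed.

Lemma mx_nz_col p (Q : 'M[C]_p) : Q != 0 -> exists b, Q *m delta_mx b (0 : 'I_1) != 0.
Proof.
move=> nz; case: (pselect (exists b, Q *m delta_mx b (0 : 'I_1) != 0)) => // hn.
exfalso; move/eqP: nz; apply; apply/matrixP => a b.
have : Q *m delta_mx b (0 : 'I_1) = 0.
  by apply/eqP; case: eqP => // /eqP ht; exfalso; apply: hn; exists b.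
move/(congr1 (fun M : 'cV[C]_p => M a 0)); rewrite mulmx_delta_entry eqxx mulr1 => ->.
by rewrite !mxE.
Qed.

Lemma adj_self p (y : 'cV[C]_p) : adjmx y *m y = ((vn2 y)%:C)%C%:M.
Proof.
rewrite [LHS]mx11_scalar; congr (_%:M).
rewrite mxE /vn2 rmorph_sum; apply: eq_bigr => i _.
by rewrite mxE mulrC mulcJ.
Qed.

Lemma minproj_block (q : FDA R N) : fda_minproj q ->
  exists j0, (forall t, j0 != t -> q t = 0) /\
    exists y : 'cV[C]_(N j0), forall v : 'cV[C]_(N j0), adjmx y *m v = 0 -> q j0 *m v = 0.
Proof.
move=> [[qq qs] [qnz qmin]].
have [j0 hj0] := fda_nz qnz.
exists j0.
set Q := q j0.
have hQs : adjmx Q = Q.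
  by have := congr1 (fun a : FDA R N => a j0) qs; rewrite /fda_star.
have hQQ : Q *m Q = Q.
  by have := congr1 (fun a : FDA R N => a j0) qq; rewrite /fda_mul.
have [b hb] := mx_nz_col hj0.
set y := Q *m delta_mx b (0 : 'I_1) in hb.
have hy : Q *m y = y by rewrite /y mulmxA hQQ.
set s : C := ((vn2 y)%:C)%C.
have hs : s != 0 by rewrite /s fmorph_eq0 gt_eqF // vn2_gt0.
have hsc : conjc s = s by rewrite /s conjc_real.
set Y := s^-1 *: (y *m adjmx y).
have hYY : Y *m Y = Y.
  have e1 : y *m adjmx y *m (y *m adjmx y) = s *: (y *m adjmx y).
    by rewrite mulmxA -(mulmxA y) adj_self -/s mul_mx_scalar scalemxAl.
  rewrite /Y -scalemxAl -scalemxAr e1 !scalerA; congr (_ *: _).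
  by rewrite -mulrA mulVf // mulr1.
have hYs : adjmx Y = Y.
  by rewrite /Y adjmxZ adjmx_mul adjmxK conjc_inv hsc.
have hYQ : Y *m Q = Y.
  rewrite /Y -scalemxAl -mulmxA; congr (_ *: (_ *m _)).
  by rewrite -hQs -adjmx_mul hy.
have hYy : Y *m y = y.
  rewrite /Y -scalemxAl -mulmxA adj_self mul_mx_scalar scalerA mulVf //.
  by rewrite scale1r.
pose q' := fda_incl (i:=j0) Y.
have q'j : q' j0 = Y by rewrite /q' fda_incl_id.
have q't : forall t, j0 != t -> q' t = 0 by move=> t ne; rewrite /q' fda_incl_neq.
have hproj : fda_projection q'.
  split; apply: fda_ext => t; rewrite ?/fda_mul ?/fda_star;
    case: (eqVneq j0 t) => [<-|ne]; rewrite ?q'j ?hYY ?hYs //.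
    by rewrite q't // mul0mx.
  by rewrite q't // adjmx0.
have hsub : fda_mul q' q = q'.
  apply: fda_ext => t; rewrite /fda_mul; case: (eqVneq j0 t) => [<-|ne].
    by rewrite q'j hYQ.
  by rewrite q't // mul0mx.
case: (qmin q' hproj hsub) => [h0|hq].
  exfalso; move/eqP: hb; apply.
  by rewrite -hYy -q'j h0 /fda_zero mul0mx.
split.
  by move=> t ne; rewrite -hq q't.
exists y => v hv.
by rewrite /Q -hq q'j /Y -scalemxAl -mulmxA hv mulmx0 scaler0.
Qed.

End F.

Section U.
Variable R : realType.
Local Notation C := (complex R).

Lemma conj_zero N (U Pj : 'M[C]_N) : unitary U -> U *m Pj *m adjmx U = 0 -> Pj = 0.
Proof.
move=> [hU1 hU2] h.
have e : adjmx U *m (U *m Pj *m adjmx U) *m U = Pj.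
  by rewrite !mulmxA hU2 mul1mx -mulmxA hU2 mulmx1.
by rewrite -e h mulmx0 mul0mx.
Qed.

Lemma conj_fix N (U Pj D : 'M[C]_N) (w : 'cV[C]_N) : unitary U ->
  U *m Pj *m adjmx U = D -> D *m w = w -> Pj *m (adjmx U *m w) = adjmx U *m w.
Proof.
move=> [hU1 hU2] hD hw.
have e : adjmx U *m (U *m Pj *m adjmx U) *m w = Pj *m (adjmx U *m w).
  by rewrite !mulmxA hU2 mul1mx.
by rewrite -e hD -mulmxA hw.
Qed.

Lemma U_adj N (U : 'M[C]_N) (w : 'cV[C]_N) : unitary U -> U *m (adjmx U *m w) = w.
Proof. by move=> [hU1 hU2]; rewrite mulmxA hU1 mul1mx. Qed.

Lemma tens0 p mm (x : 'M[C]_p) : tens_id_pad mm 0 x = 0.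
Proof. by apply/matrixP => r c; rewrite !mxE muln0. Qed.

Lemma tens_delta_fix p mm e (o : 'I_p) (a : 'I_mm) : val o = 0%N -> (a < e)%N ->
  tens_id_pad mm e (delta_mx o o : 'M[C]_p) *m delta_mx a (0 : 'I_1) = delta_mx a 0.
Proof.
move=> ho ha; apply/matrixP => r z; rewrite (ord1 z) mulmx_delta_entry eqxx mulr1 !mxE eqxx andbT.
have p1 : (0 < p)%N by apply: leq_ltn_trans (leq0n _) (ltn_ord o).
have hae : (a < p * e)%N by apply: leq_trans ha _; rewrite leq_pmull.
rewrite (modn_small ha) (divn_small ha) hae /=.
case: (eqVneq r a) => [->|nra].
  rewrite hae (modn_small ha) eqxx /= (divn_small ha) /mxget.
  case: insubP => [r' _ hr'|]; last by rewrite p1.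
  have -> : r' = o by apply: val_inj; rewrite hr' ho.
  by rewrite mxE !eqxx.
case: (boolP [&& (r < p * e)%N & (r %% e == a)%N]) => [/andP[hr /eqP hre]|]; last first.
  by [].
rewrite /mxget.
have hd : (r %/ e != 0)%N.
  apply/negP => /eqP hd; move/eqP: nra; apply.
  apply: val_inj => /=; by rewrite (divn_eq r e) hd mul0n add0n hre.
case: insubP => [r' _ hr'|]; last by [].
case: insubP => [c' _ hc'|]; last by [].
rewrite mxE; case: (eqVneq r' o) => [ero|]; last by [].
exfalso; move: hd; by rewrite -hr' ero ho eqxx.
Qed.

End U.

Lemma norm_fix (R : realType) K (N : 'I_K -> nat) (x : FDA R N) j (v : 'cV[complex R]_(N j)) :
  v != 0 -> x j *m v = v -> 1 <= fda_norm x.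
Proof. move=> nz h; exact: le_trans (opnorm_fix nz h) (fda_norm_ge x j). Qed.

Lemma delta_nz (R : realType) mm (a : 'I_mm) : (delta_mx a (0 : 'I_1) : 'cV[complex R]_mm) != 0.
Proof.
apply/negP => /eqP h; have := congr1 (fun M : 'cV[complex R]_mm => M a 0) h.
by rewrite !mxE !eqxx /= => /eqP; rewrite oner_eq0.
Qed.

Unset Implicit Arguments.

Theorem lemma2p5 (R : realType) (k l : nat) (n : 'I_k -> nat) (m : 'I_l -> nat)
  (hn : forall j, (0 < n j)%N) (phi : FDA R n -> FDA R m) :
  Lmin_embedding phi ->
  forall (i : 'I_k) (E : 'I_l -> nat),
    (forall j, multiplicity phi i j (E j)) ->
    (\sum_(j < l) E j)%N = 1%N.
Proof.
move=> [[hadd hscale hmul hstar hone] hinj hrho] i E hE.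
pose o := Ordinal (hn i).
pose p : FDA R n := fda_incl (i:=i) (delta_mx o o).
have pmin : fda_minproj p := minproj_delta R o.
pose P := phi p.
have rp : rho_min p <= 0.
  rewrite /rho_min.
  have hlb : has_lbound [set d : R | exists q : FDA R n, fda_minproj q /\ d = fda_norm (fda_sub p q)]%classic.
    by exists 0 => d [q [_ ->]]; apply: fda_norm_ge0.
  apply: (ge_inf hlb); exists p; split => //.
  have -> : fda_sub p p = fda_zero R n by apply: fda_ext => t; rewrite /fda_sub subrr.
  by rewrite fda_norm_zero.
have rP : rho_min P <= 0 by rewrite /P hrho.
have phi0 : phi (fda_zero R n) = fda_zero R m.
  have := hadd (fda_zero R n) (fda_zero R n).
  have -> : fda_add (fda_zero R n) (fda_zero R n) = fda_zero R n.
    by apply: fda_ext => t; rewrite /fda_add /fda_zero addr0.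
  move=> h; apply: fda_ext => t; have := congr1 (fun a : FDA R m => a t) h.
  rewrite /fda_add /fda_zero => e.
  by apply: (addrI (phi (fda_zero R n) t)); rewrite addr0 -e.
have hfix : forall j (a : 'I_(m j)), (a < E j)%N ->
    exists U : 'M[complex R]_(m j), unitary U /\
      P j *m (adjmx U *m delta_mx a (0 : 'I_1)) = adjmx U *m delta_mx a (0 : 'I_1).
  move=> j a ha; have [_ [U [hU hUP]]] := hE j.
  exists U; split => //; apply: (conj_fix hU (hUP (delta_mx o o))).
  by apply: tens_delta_fix.
have hpos : forall j, (0 < E j)%N -> (0 < m j)%N.
  move=> j hj; have [hle _] := hE j.
  have h : (0 < n i * E j)%N by rewrite muln_gt0 hn.
  exact: leq_trans h hle.
have sum_nz : (\sum_(j < l) E j)%N != 0%N.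
  apply/negP => /eqP h0.
  have hz : forall j, E j = 0%N.
    by move=> j; move: h0; rewrite (bigD1 j) //= => /eqP; rewrite addn_eq0 => /andP[/eqP -> _].
  have hP : P = fda_zero R m.
    apply: fda_ext => j; have [_ [U [hU hUP]]] := hE j.
    by apply: (conj_zero hU); rewrite hUP hz tens0.
  have : p = fda_zero R n by apply: hinj; rewrite phi0 -hP.
  by case: pmin => _ [].
case: (ltngtP (\sum_(j < l) E j)%N 1) => [hlt|hgt|//].
  by move: sum_nz; rewrite -leqn0 -ltnS hlt.
exfalso.
have [j1 hj1] : exists j1, (0 < E j1)%N.
  case: (pselect (exists j1, (0 < E j1)%N)) => // hn0; exfalso; move/negP: sum_nz; apply.
  apply/eqP; apply: big1 => j _; apply/eqP; rewrite -leqn0 leqNgt; apply/negP => hj.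
  by apply: hn0; exists j.
have r1 : 1 <= rho_min P.
  rewrite /rho_min; apply: lb_le_inf.
    pose o1 := Ordinal (hpos j1 hj1).
    pose qB : FDA R m := fda_incl (i:=j1) (delta_mx o1 o1).
    exists (fda_norm (fda_sub P qB)), qB; split => //; exact: minproj_delta.
  move=> d [q [hq ->]].
  have [j0 [hqt [y hy]]] := minproj_block hq.
  case: (ltnP 1 (E j0)) => [h2|h1].
    have hm0 : (1 < m j0)%N.
      have [hle _] := hE j0; apply: leq_trans h2 (leq_trans _ hle).
      by rewrite leq_pmull // hn.
    pose a0 := Ordinal (ltn_trans (ltnSn 0) hm0).
    pose a1 := Ordinal hm0.
    have [hle [U [hU hUP]]] := hE j0.
    have hD := hUP (delta_mx o o).
    pose u1 := adjmx U *m (delta_mx a0 (0 : 'I_1)).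
    pose u2 := adjmx U *m (delta_mx a1 (0 : 'I_1)).
    have Pu1 : P j0 *m u1 = u1.
      by apply: (conj_fix hU hD); apply: tens_delta_fix => //=; apply: ltn_trans h2.
    have Pu2 : P j0 *m u2 = u2 by apply: (conj_fix hU hD); apply: tens_delta_fix.
    pose al := (adjmx y *m u1) 0 0.
    pose be := (adjmx y *m u2) 0 0.
    pose v := if al == 0 then u1 else be *: u1 - al *: u2.
    have hyv : adjmx y *m v = 0.
      have e1 : adjmx y *m u1 = al%:M by apply: mx11_scalar.
      have e2 : adjmx y *m u2 = be%:M by apply: mx11_scalar.
      rewrite /v; case: eqP => [h0|_].
        by rewrite e1 h0; apply/matrixP => a b; rewrite !mxE mul0rn.
      rewrite mulmxBr -!scalemxAr e1 e2.
      by rewrite !scale_scalar_mx mulrC subrr.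
    have hPv : P j0 *m v = v.
      rewrite /v; case: eqP => _ //.
      by rewrite mulmxBr -!scalemxAr Pu1 Pu2.
    have hv0 : v != 0.
      apply/negP => /eqP h0; have := congr1 (fun w => U *m w) h0.
      rewrite mulmx0 /v; case: eqP => [_|/eqP hal].
        by rewrite /u1 U_adj // => /eqP; rewrite (negbTE (delta_nz _ _)).
      rewrite mulmxBr -!scalemxAr /u1 /u2 !U_adj // => h.
      have := congr1 (fun w : 'cV[complex R]_(m j0) => w a1 0) h.
      rewrite !mxE !eqxx /=.
      by rewrite mulr0 mulr1 sub0r => /eqP; rewrite oppr_eq0 (negbTE hal).
    apply: (norm_fix (j:=j0) hv0).
    by rewrite /fda_sub mulmxBl hPv hy // subr0.
  have [j [nj hj]] : exists j, j0 != j /\ (0 < E j)%N.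
    case: (pselect (exists j, j0 != j /\ (0 < E j)%N)) => // hn0; exfalso.
    move: hgt; rewrite (bigD1 j0) //= big1.
      by rewrite addn0 ltnNge h1.
    move=> j nj; apply/eqP; rewrite -leqn0 leqNgt; apply/negP => hj.
    by apply: hn0; exists j; split => //; rewrite eq_sym.
  pose a0 := Ordinal (hpos j hj).
  have [U [hU hUv]] := hfix j a0 hj.
  have hv0 : adjmx U *m delta_mx a0 (0 : 'I_1) != 0.
    apply/negP => /eqP h0; have := congr1 (fun w => U *m w) h0.
    by rewrite mulmx0 U_adj // => /eqP; rewrite (negbTE (delta_nz _ _)).
  apply: (norm_fix (j:=j) hv0).
  by rewrite /fda_sub hqt // subr0.
have : (1 : R) <= 0 by apply: le_trans r1 rP.
by rewrite ler10.
Qed.
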